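(* Let $S$ be a semiring, $\{P_i\}_{i\in I}$ a family of left $S$-semimodules and $M$ a left $S$-semimodule. Then $\bigoplus_{i\in I}P_i$ is $M$-$e$-projective if and only if $P_i$ is $M$-$e$-projective for each $i\in I$. Consequently, the class of $e$-projective left $S$-semimodules is closed under direct sums.
   Context: A semiring $(S,+,0,\cdot,1)$ consists of a commutative monoid $(S,+,0)$ and a monoid $(S,\cdot,1)$ with $0\neq 1$, absorbing zero and both distributive laws; left $S$-semimodules and $S$-linear maps are as for modules without subtraction; $\bigoplus_{i\in I}P_i$ is the (external) direct sum, i.e. the coproduct of finitely supported families. For an $S$-linear $h:X\to Y$, $\mathrm{Ker}(h)=\{x\mid h(x)=0\}$; $h$ is $k$-normal if $h(x)=h(x')$ implies $x+k=x'+k'$ for some $k,k'\in\mathrm{Ker}(h)$. A short exact sequence $0\to L\xrightarrow{f}M\xrightarrow{g}N\to0$ (of semimodules or commutative monoids) means: $f$ injective, $f(L)=\mathrm{Ker}(g)$, $g$ surjective and $k$-normal. $P$ is $M$-$e$-projective if for every short exact sequence $0\to L\xrightarrow{f}M\xrightarrow{g}N\to0$ of left $S$-semimodules with middle term $M$, the sequence $0\to\mathrm{Hom}_S(P,L)\xrightarrow{f\circ-}\mathrm{Hom}_S(P,M)\xrightarrow{g\circ-}\mathrm{Hom}_S(P,N)\to0$ is a short exact sequence of commutative monoids (Hom-sets with pointwise addition); $P$ is $e$-projective if it is $M$-$e$-projective for every $M$. *)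

(* Defs.v *)
From HB Require Import structures.
From mathcomp Require Import all_boot all_algebra.
From mathcomp Require Import boolp.
From Stdlib Require Import List.

Set Implicit Arguments.
Unset Strict Implicit.
Unset Printing Implicit Defensive.
Import GRing.Theory.
Local Open Scope ring_scope.

Definition slinear (S : nzSemiRingType) (X Y : lSemiModType S) (h : X -> Y) : Prop :=
  [/\ h 0 = 0,
      (forall x y, h (x + y) = h x + h y) &
      (forall (a : S) x, h (a *: x) = a *: h x)].

Definition Ker (A B : nmodType) (h : A -> B) : A -> Prop := fun x => h x = 0.

Definition knormal (A B : nmodType) (h : A -> B) : Prop :=
  forall x x', h x = h x' ->
    exists k k', Ker h k /\ Ker h k' /\ x + k = x' + k'.

Definition short_exact (A B C : nmodType) (f : A -> B) (g : B -> C) : Prop :=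
  [/\ injective f,
      (forall b, Ker g b <-> exists a, f a = b),
      (forall c, exists b, g b = c) &
      knormal g].

Section Hom.
Variables (S : nzSemiRingType) (P M : lSemiModType S).

Record hom := Hom { hom_fun : P -> M; hom_lin : slinear hom_fun }.

Lemma hom_ext (u v : hom) : hom_fun u = hom_fun v -> u = v.
Proof.
case: u v => fu lu [fv lv] /= e; subst fv.
by rewrite (Prop_irrelevance lu lv).
Qed.

HB.instance Definition _ := gen_eqMixin hom.
HB.instance Definition _ := gen_choiceMixin hom.

Lemma hom0_lin : slinear (fun _ : P => (0 : M)).
Proof. by split => // [x y|a x]; rewrite ?addr0 ?scaler0. Qed.
Definition hom0 := Hom hom0_lin.

Lemma homD_lin (u v : hom) : slinear (fun p => hom_fun u p + hom_fun v p).
Proof.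
case: u v => fu [u0 uD uZ] [fv [v0 vD vZ]] /=; split.
- by rewrite u0 v0 addr0.
- by move=> x y; rewrite uD vD addrACA.
- by move=> a x; rewrite uZ vZ scalerDr.
Qed.
Definition homD (u v : hom) := Hom (homD_lin u v).

Lemma homDA : associative homD.
Proof. by move=> u v w; apply: hom_ext; apply: funext => p /=; rewrite addrA. Qed.
Lemma homDC : commutative homD.
Proof. by move=> u v; apply: hom_ext; apply: funext => p /=; rewrite addrC. Qed.
Lemma hom0D : left_id hom0 homD.
Proof. by move=> u; apply: hom_ext; apply: funext => p /=; rewrite add0r. Qed.

HB.instance Definition _ := GRing.isNmodule.Build hom homDA homDC hom0D.

End Hom.

Section Post.
Variables (S : nzSemiRingType) (P X Y : lSemiModType S).
Variables (h : X -> Y) (hh : slinear h).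

Lemma post_lin (u : hom P X) : slinear (fun p => h (hom_fun u p)).
Proof.
case: hh => h0 hD hZ; case: u => fu [u0 uD uZ] /=; split.
- by rewrite u0 h0.
- by move=> x y; rewrite uD hD.
- by move=> a x; rewrite uZ hZ.
Qed.

Definition post (u : hom P X) : hom P Y := Hom (post_lin u).
End Post.

Definition M_e_projective (S : nzSemiRingType) (P M : lSemiModType S) : Prop :=
  forall (L N : lSemiModType S) (f : L -> M) (g : M -> N)
         (hf : slinear f) (hg : slinear g),
    short_exact f g ->
    short_exact (@post S P L M f hf) (@post S P M N g hg).

Definition e_projective (S : nzSemiRingType) (P : lSemiModType S) : Prop :=
  forall M : lSemiModType S, M_e_projective P M.

Section DirectSum.
Variables (S : nzSemiRingType) (I : Type) (P : I -> lSemiModType S).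

Definition fin_supp (x : forall i, P i) : Prop :=
  exists s : list I, forall i, ~ List.In i s -> x i = 0.

Record dsum := DSum { dsum_fun : forall i, P i; dsum_supp : fin_supp dsum_fun }.

Lemma dsum_ext (u v : dsum) : dsum_fun u = dsum_fun v -> u = v.
Proof.
case: u v => fu lu [fv lv] /= e; subst fv.
by rewrite (Prop_irrelevance lu lv).
Qed.

HB.instance Definition _ := gen_eqMixin dsum.
HB.instance Definition _ := gen_choiceMixin dsum.

Lemma dsum0_supp : fin_supp (fun i => 0 : P i).
Proof. by exists nil. Qed.
Definition dsum0 := DSum dsum0_supp.

Lemma dsumD_supp (u v : dsum) : fin_supp (fun i => dsum_fun u i + dsum_fun v i).
Proof.
case: u v => fu [s1 h1] [fv [s2 h2]] /=; exists (s1 ++ s2) => i hi.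
rewrite h1 ?h2 ?addr0 // => H; apply: hi; apply: in_or_app; tauto.
Qed.
Definition dsumD (u v : dsum) := DSum (dsumD_supp u v).

Lemma dsumDA : associative dsumD.
Proof. by move=> u v w; apply: dsum_ext; apply: functional_extensionality_dep => i /=; rewrite addrA. Qed.
Lemma dsumDC : commutative dsumD.
Proof. by move=> u v; apply: dsum_ext; apply: functional_extensionality_dep => i /=; rewrite addrC. Qed.
Lemma dsum0D : left_id dsum0 dsumD.
Proof. by move=> u; apply: dsum_ext; apply: functional_extensionality_dep => i /=; rewrite add0r. Qed.

HB.instance Definition _ := GRing.isNmodule.Build dsum dsumDA dsumDC dsum0D.

Lemma dsumZ_supp (a : S) (u : dsum) : fin_supp (fun i => a *: dsum_fun u i).
Proof. by case: u => fu [s h] /=; exists s => i hi; rewrite h // scaler0. Qed.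
Definition dsumZ (a : S) (u : dsum) : dsum := DSum (dsumZ_supp a u).

Lemma dsumZA a b (v : dsum) : dsumZ a (dsumZ b v) = dsumZ (a * b) v.
Proof. by apply: dsum_ext; apply: functional_extensionality_dep => i /=; rewrite scalerA. Qed.
Lemma dsumZ0 (v : dsum) : dsumZ 0 v = 0.
Proof. by apply: dsum_ext; apply: functional_extensionality_dep => i /=; rewrite scale0r. Qed.
Lemma dsumZ1 : left_id 1 dsumZ.
Proof. by move=> v; apply: dsum_ext; apply: functional_extensionality_dep => i /=; rewrite scale1r. Qed.
Lemma dsumZDr : right_distributive dsumZ +%R.
Proof. by move=> a u v; apply: dsum_ext; apply: functional_extensionality_dep => i /=; rewrite scalerDr. Qed.
Lemma dsumZDl (v : dsum) : {morph dsumZ^~ v : a b / a + b}.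
Proof. by move=> a b; apply: dsum_ext; apply: functional_extensionality_dep => i /=; rewrite scalerDl. Qed.

HB.instance Definition _ :=
  GRing.Nmodule_isLSemiModule.Build S dsum dsumZA dsumZ0 dsumZ1 dsumZDr dsumZDl.

End DirectSum.

Definition direct_sum (S : nzSemiRingType) (I : Type) (P : I -> lSemiModType S)
  : lSemiModType S := dsum P.

(* Main.v *)
Require Import Defs.
From mathcomp Require Import all_boot all_algebra.
From HB Require Import structures.
From mathcomp Require Import boolp.
From Stdlib Require List.

Set Implicit Arguments.
Unset Strict Implicit.
Unset Printing Implicit Defensive.
Import GRing.Theory.
Local Open Scope ring_scope.
Local Notation hom := Defs.hom.
Local Notation Hom := Defs.Hom.

Definition eqI (I : Type) : Type := I.
HB.instance Definition _ (I : Type) := gen_eqMixin (eqI I).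

Lemma homE (S : nzSemiRingType) (X Y : lSemiModType S) (u v : hom X Y) :
  (forall p, hom_fun u p = hom_fun v p) -> u = v.
Proof. by move=> e; apply: hom_ext; apply: funext. Qed.

Lemma lin_sum (S : nzSemiRingType) (X Y : lSemiModType S) (h : X -> Y)
  (hh : slinear h) (T : Type) (r : seq T) (F : T -> X) :
  h (\sum_(i <- r) F i) = \sum_(i <- r) h (F i).
Proof. case: hh => h0 hD _; exact: (big_morph h hD h0). Qed.

Section Comp.
Variables (S : nzSemiRingType) (X Y Z : lSemiModType S).
Lemma comp_lin (u : hom Y Z) (v : hom X Y) :
  slinear (fun p => hom_fun u (hom_fun v p)).
Proof.
case: u v => fu [u0 uD uZ] [fv [v0 vD vZ]] /=; split.
- by rewrite v0 u0.
- by move=> x y; rewrite vD uD.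
- by move=> a x; rewrite vZ uZ.
Qed.
Definition comp (u : hom Y Z) (v : hom X Y) : hom X Z := Hom (comp_lin u v).
End Comp.

(* the first two conditions are automatic *)
Lemma auto12 (S : nzSemiRingType) (P L M N : lSemiModType S)
  (f : L -> M) (g : M -> N) (hf : slinear f) (hg : slinear g) :
  short_exact f g ->
  injective (@post S P L M f hf) /\
  (forall b, Ker (@post S P M N g hg) b <-> exists a, @post S P L M f hf a = b).
Proof.
case=> finj fker _ _; split.
  move=> a b /(congr1 (@hom_fun _ _ _)) /= e; apply: homE => p.
  by apply: finj; have := congr1 (fun F => F p) e.
move=> b; split.
  move=> kb.
  have H : forall p, exists l, f l = hom_fun b p.
    move=> p; apply/fker; rewrite /Ker.
    by have := congr1 (fun F => hom_fun F p) kb.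
  pose a p := proj1_sig (cid (H p)).
  have aE p : f (a p) = hom_fun b p by rewrite /a; case: cid.
  case: hf => [f0 fD fZ].
  clearbody a; clear H.
  case: b {kb} aE => fb [b0 bD bZ] /= aE.
  have al : slinear a.
    split.
    - by apply: finj; rewrite aE f0.
    - by move=> x y; apply: finj; rewrite fD !aE bD.
    - by move=> c x; apply: finj; rewrite fZ !aE bZ.
  exists (Hom al); apply: homE => p /=; exact: aE.
case=> a <-; apply: homE => p /=.
by apply/fker; exists (hom_fun a p).
Qed.

Lemma Mep_iff (S : nzSemiRingType) (P M : lSemiModType S) :
  (forall (L N : lSemiModType S) (f : L -> M) (g : M -> N)
         (hf : slinear f) (hg : slinear g),
    short_exact f g ->
    (forall w : hom P N, exists v, @post S P M N g hg v = w) /\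
    knormal (@post S P M N g hg)) ->
  M_e_projective P M.
Proof.
move=> H L N f g hf hg se; have [h1 h2] := auto12 P hf hg se.
by have [h3 h4] := H L N f g hf hg se; split.
Qed.

Lemma Mep_surj (S : nzSemiRingType) (P M : lSemiModType S) :
  M_e_projective P M ->
  (forall (L N : lSemiModType S) (f : L -> M) (g : M -> N)
         (hf : slinear f) (hg : slinear g),
    short_exact f g ->
    (forall w : hom P N, exists v, @post S P M N g hg v = w) /\
    knormal (@post S P M N g hg)).
Proof.
move=> H L N f g hf hg se; by case: (H L N f g hf hg se).
Qed.

Section DS.
Variables (S : nzSemiRingType) (I : Type) (P : I -> lSemiModType S).
Local Notation J := (eqI I).
Local Notation D := (dsum P).

Definition proj_fun (i : I) (x : D) : P i := dsum_fun x i.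
Lemma proj_lin i : slinear (proj_fun i).
Proof. by split. Qed.
Definition proj i : hom D (P i) := Hom (proj_lin i).

Definition inj_fun (i : I) (x : P i) : forall j, P j :=
  fun j => match pselect (i = j) with
           | left e => eq_rect i (fun j => (P j : Type)) x j e
           | right _ => 0 end.

Lemma inj_same i (x : P i) : inj_fun x i = x.
Proof.
rewrite /inj_fun; case: pselect => [e|//].
by rewrite (Prop_irrelevance e erefl).
Qed.

Lemma inj_diff i j (x : P i) : i <> j -> inj_fun x j = 0.
Proof. by rewrite /inj_fun; case: pselect. Qed.

Lemma inj_supp i (x : P i) : fin_supp (inj_fun x).
Proof.
exists [:: i] => j nj; apply: inj_diff => e; apply: nj; left; exact: e.
Qed.

Definition inj_d i (x : P i) : D := DSum (inj_supp x).

Lemma inj_lin i : slinear (@inj_d i).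
Proof.
split.
- apply: dsum_ext; apply: functional_extensionality_dep => j /=.
  rewrite /inj_fun; case: pselect => [e|//]; by subst j.
- move=> x y; apply: dsum_ext; apply: functional_extensionality_dep => j /=.
  rewrite /inj_fun; case: pselect => [e|_]; [by subst j | by rewrite addr0].
- move=> a x; apply: dsum_ext; apply: functional_extensionality_dep => j /=.
  rewrite /inj_fun; case: pselect => [e|_]; [by subst j | by rewrite scaler0].
Qed.
Definition inj i : hom (P i) D := Hom (inj_lin i).

Lemma notin_In (s : seq J) (i : J) : i \notin s -> ~ List.In i s.
Proof.
elim: s => [_ []|a s IH]; rewrite in_cons negb_or => /andP[ne ns] [e|H].
  by rewrite e eqxx in ne.
exact: IH.
Qed.

Lemma supp_mem (x : D) (s : seq J) :
  (forall i, ~ List.In i s -> dsum_fun x i = 0) ->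
  forall i : J, i \notin s -> dsum_fun x i = 0.
Proof. by move=> H i /notin_In; apply: H. Qed.

Lemma sum_sub (M : nmodType) (F : J -> M) (s1 s2 : seq J) :
  {subset s1 <= s2} -> (forall i, i \notin s1 -> F i = 0) ->
  \sum_(i <- undup s1) F i = \sum_(i <- undup s2) F i.
Proof.
move=> sub z.
rewrite [RHS](bigID (fun i => i \in s1)) /=.
rewrite [X in _ + X]big1 ?addr0; last by move=> i /z.
rewrite -[X in _ = X]big_filter; apply: perm_big.
apply: uniq_perm; rewrite ?filter_uniq ?undup_uniq // => i.
rewrite mem_filter !mem_undup; case e: (i \in s1) => //=.
by rewrite (sub _ e).
Qed.

Lemma sum_indep (M : nmodType) (F : J -> M) (s1 s2 : seq J) :
  (forall i, i \notin s1 -> F i = 0) -> (forall i, i \notin s2 -> F i = 0) ->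
  \sum_(i <- undup s1) F i = \sum_(i <- undup s2) F i.
Proof.
move=> z1 z2; rewrite (@sum_sub _ F s1 (s1 ++ s2)) //.
  rewrite (@sum_sub _ F s2 (s1 ++ s2)) // => i; rewrite mem_cat => ->.
  by rewrite orbT.
by move=> i; rewrite mem_cat => ->.
Qed.

Lemma decomp (x : D) (s : seq J) :
  (forall i : J, i \notin s -> dsum_fun x i = 0) ->
  x = \sum_(i <- undup s) inj_d (dsum_fun x i).
Proof.
move=> z; apply: dsum_ext; apply: functional_extensionality_dep => j.
have -> : dsum_fun (\sum_(i <- undup s) inj_d (dsum_fun x i)) j =
          \sum_(i <- undup s) dsum_fun (inj_d (dsum_fun x i)) j.
  by apply: (big_morph (fun z : D => dsum_fun z j)).
case jin: ((j : J) \in undup s).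
  rewrite (bigD1_seq (j : J)) ?undup_uniq //= inj_same big1 ?addr0 //.
  move=> i ne; apply: inj_diff => e; by rewrite e eqxx in ne.
rewrite z; last by rewrite -mem_undup jin.
rewrite big1_seq // => i /andP[_ iin]; apply: inj_diff => e.
by rewrite -e iin in jin.
Qed.

Lemma hom_decomp (M : lSemiModType S) (u : hom D M) (x : D) (s : seq J) :
  (forall i : J, i \notin s -> dsum_fun x i = 0) ->
  hom_fun u x = \sum_(i <- undup s) hom_fun u (inj_d (dsum_fun x i)).
Proof.
move=> z; rewrite {1}(decomp z); apply: lin_sum; exact: hom_lin.
Qed.

Definition supp_of (x : D) : seq J := proj1_sig (cid (dsum_supp x)).
Lemma supp_ofP x : forall i : J, i \notin supp_of x -> dsum_fun x i = 0.
Proof. apply: supp_mem; rewrite /supp_of; by case: cid. Qed.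
Arguments supp_ofP : clear implicits.

Section HSum.
Variables (M : lSemiModType S) (h : forall i, hom (P i) M).



Definition hsum_fun (x : D) : M :=
  \sum_(i <- undup (supp_of x)) hom_fun (h i) (dsum_fun x i).

Lemma hsumE x (s : seq J) : (forall i : J, i \notin s -> dsum_fun x i = 0) ->
  hsum_fun x = \sum_(i <- undup s) hom_fun (h i) (dsum_fun x i).
Proof.
move=> z; apply: sum_indep => i ni.
  by rewrite supp_ofP // ; case: (hom_lin (h i)).
by rewrite z //; case: (hom_lin (h i)).
Qed.

Lemma hsum_lin : slinear hsum_fun.
Proof.
split.
- rewrite (@hsumE 0 [::]) ?big_nil //.
- move=> x y.
  have zx := supp_ofP x; have zy := supp_ofP y.
  pose s := supp_of x ++ supp_of y.
  have zx' : forall i : J, i \notin s -> dsum_fun x i = 0.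
    by move=> i; rewrite mem_cat negb_or => /andP[? _]; apply: zx.
  have zy' : forall i : J, i \notin s -> dsum_fun y i = 0.
    by move=> i; rewrite mem_cat negb_or => /andP[_ ?]; apply: zy.
  have zxy : forall i : J, i \notin s -> dsum_fun (x + y) i = 0.
    by move=> i ni /=; rewrite zx' // zy' // addr0.
  rewrite (hsumE zxy) (hsumE zx') (hsumE zy') -big_split /=.
  by apply: eq_bigr => i _; case: (hom_lin (h i)) => _ -> _.
- move=> a x.
  have zx := supp_ofP x.
  have zax : forall i : J, i \notin supp_of x -> dsum_fun (a *: x) i = 0.
    by move=> i ni /=; rewrite zx // scaler0.
  rewrite (hsumE zax) /hsum_fun scaler_sumr.
  by apply: eq_bigr => i _; case: (hom_lin (h i)) => _ _ ->.
Qed.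
Definition hsum : hom D M := Hom hsum_lin.

End HSum.
Arguments hsumE {M} h {x s}.
Arguments hom_decomp {M} u {x s}.

Lemma Ker_post (L N : lSemiModType S) (X : lSemiModType S) (g : L -> N)
   (hg : slinear g) (k : hom X L) :
   Ker (@post S X L N g hg) k <-> forall p, g (hom_fun k p) = 0.
Proof.
split.
  by move=> e p; have := congr1 (fun F => hom_fun F p) e.
by move=> e; apply: homE => p /=; rewrite e.
Qed.

Lemma dir1 (M : lSemiModType S) :
  M_e_projective D M -> forall i, M_e_projective (P i) M.
Proof.
move=> H i; apply: Mep_iff => L N f g hf hg se.
have [Hs Hk] := Mep_surj H hf hg se; split.
  move=> w; have [v ev] := Hs (comp w (proj i)).
  exists (comp v (inj i)); apply: homE => p /=.
  have := congr1 (fun F => hom_fun F (inj_d p)) ev => /= ->.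
  by rewrite /proj_fun inj_same.
move=> u u' e.
have e' : @post S D M N g hg (comp u (proj i)) = post hg (comp u' (proj i)).
  apply: homE => p /=; by have := congr1 (fun F => hom_fun F (proj_fun i p)) e.
have [k [k' [kk [kk' ek]]]] := Hk _ _ e'.
exists (comp k (inj i)), (comp k' (inj i)); split; [|split].
- by apply/Ker_post => p /=; move/Ker_post: kk; apply.
- by apply/Ker_post => p /=; move/Ker_post: kk'; apply.
- apply: homE => p /=.
  have := congr1 (fun F => hom_fun F (inj_d p)) ek => /=.
  by rewrite /proj_fun inj_same.
Qed.

Lemma dir2 (M : lSemiModType S) :
  (forall i, M_e_projective (P i) M) -> M_e_projective D M.
Proof.
move=> H; apply: Mep_iff => L N f g hf hg se; split.
  move=> w.
  have Hi : forall i, exists v, @post S (P i) M N g hg v = comp w (inj i).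
    by move=> i; have [Hs _] := Mep_surj (H i) hf hg se; apply: Hs.
  pose v i := proj1_sig (cid (Hi i)).
  have vE i : post hg (v i) = comp w (inj i) by rewrite /v; case: cid.
  exists (hsum v); apply: homE => x /=.
  have zx := supp_ofP x.
  rewrite (hsumE v zx) (lin_sum hg) (hom_decomp w zx).
  apply: eq_bigr => i _.
  by have := congr1 (fun F => hom_fun F (dsum_fun x i)) (vE i).
move=> u u' e.
have Hi : forall i, exists kk : hom (P i) M * hom (P i) M,
    Ker (post hg) kk.1 /\ Ker (post hg) kk.2 /\
    comp u (inj i) + kk.1 = comp u' (inj i) + kk.2.
  move=> i; have [_ Hk] := Mep_surj (H i) hf hg se.
  have ei : post hg (comp u (inj i)) = post hg (comp u' (inj i)).
    apply: homE => p /=.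
    by have := congr1 (fun F => hom_fun F (inj_d p)) e.
  have [k [k' [? [? ?]]]] := Hk _ _ ei.
  by exists (k, k').
pose kk i := proj1_sig (cid (Hi i)).
have kkE i := proj2_sig (cid (Hi i)).
exists (hsum (fun i => (kk i).1)), (hsum (fun i => (kk i).2)).
split; [|split].
- apply/Ker_post => x /=; have zx := supp_ofP x.
  rewrite (hsumE _ zx) (lin_sum hg) big1 // => i _.
  have [k1 _] := kkE i; move/Ker_post: k1; apply.
- apply/Ker_post => x /=; have zx := supp_ofP x.
  rewrite (hsumE _ zx) (lin_sum hg) big1 // => i _.
  have [_ [k2 _]] := kkE i; move/Ker_post: k2; apply.
- apply: homE => x /=; have zx := supp_ofP x.
  rewrite (hsumE _ zx) (hsumE _ zx) (hom_decomp u zx) (hom_decomp u' zx).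
  rewrite -!big_split /=; apply: eq_bigr => i _.
  have [_ [_ ee]] := kkE i.
  by have := congr1 (fun F => hom_fun F (dsum_fun x i)) ee.
Qed.

End DS.

Theorem mainTheorem11 :
  (forall (S : nzSemiRingType) (I : Type) (P : I -> lSemiModType S)
          (M : lSemiModType S),
     M_e_projective (direct_sum P) M <-> (forall i : I, M_e_projective (P i) M))
  /\
  (forall (S : nzSemiRingType) (I : Type) (P : I -> lSemiModType S),
     (forall i : I, e_projective (P i)) -> e_projective (direct_sum P)).
Proof.
split.
  move=> S I P M; split; [exact: dir1 | exact: dir2].
move=> S I P H M; apply: dir2 => i; exact: H.
Qed.
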